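(* Let $G$ be a finite transitive permutation group, let $p$ be a prime, and suppose that a point stabiliser $H=G_\alpha$ contains a quasi-semiregular $p$-element. Then: (1) $H$ contains a Sylow $p$-subgroup of $G$; (2) if $S$ is a Sylow $p$-subgroup of $G$ contained in $H$, then $N_G(S)\le N_G(H)$; (3) if moreover $N_G(H)=H$, then $N_G(S)=N_H(S)$.
   Context: A permutation $g$ is quasi-semiregular if $\langle g\rangle$ has a unique fixed point and acts semiregularly (only the identity fixes a point) on the remaining points. *)

(* Defs.v *)
From mathcomp Require Import all_boot all_fingroup all_solvable.
Local Open Scope group_scope.
Set Implicit Arguments. Unset Strict Implicit. Unset Printing Implicit Defensive.

Definition quasi_semiregular (T : finType) (g : {perm T}) : Prop :=
  exists a : T,
    (forall x : T, (forall h, h \in <[g]> -> h x = x) <-> x = a) /\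
    (forall x : T, x != a -> forall h, h \in <[g]> -> h x = x -> h = 1%g).

(* Main.v *)
Require Import Defs.
From mathcomp Require Import all_boot all_fingroup all_solvable.
Local Open Scope group_scope.

Theorem lemma2p3 (T : finType) (G : {group {perm T}}) (p : nat) (alpha : T) :
  prime p ->
  [transitive G, on [set: T] | 'P] ->
  (exists2 g, g \in 'C_G[alpha | 'P] & p.-elt g /\ quasi_semiregular g) ->
  [/\ (exists S : {group {perm T}}, p.-Sylow(G) S /\ S \subset 'C_G[alpha | 'P]),
      (forall S : {group {perm T}}, p.-Sylow(G) S -> S \subset 'C_G[alpha | 'P] ->
          'N_G(S) \subset 'N_G('C_G[alpha | 'P]))
    & (forall S : {group {perm T}}, p.-Sylow(G) S -> S \subset 'C_G[alpha | 'P] ->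
          'N_G('C_G[alpha | 'P]) = 'C_G[alpha | 'P] ->
          'N_G(S) = 'N_('C_G[alpha | 'P])(S))%g].
Proof.
move=> pr_p trG [g gH [pg [a [Ha _]]]].
set H := 'C_G[alpha | 'P].
have sHG : H \subset G by apply: subsetIl.
have galpha : g alpha = alpha.
  by move: gH; rewrite inE => /andP[_ /astab1P]; rewrite /= apermE.
have fixg : forall x, g x = x -> x = alpha.
  move=> x gx.
  have -> : x = a.
    apply/Ha => h /cycleP[k ->]; elim: k => [|k IH]; first by rewrite expg0 perm1.
    by rewrite expgS permM gx IH.
  symmetry; apply/Ha => h /cycleP[k ->]; elim: k => [|k IH]; first by rewrite expg0 perm1.
  by rewrite expgS permM galpha IH.
have pgC : p.-group <[g]> by [].
have FixE : 'Fix_([set: T] | 'P)(<[g]>) = [set alpha].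
  apply/setP => x; rewrite in_setI in_setT in_set1 /=; apply/afixP/eqP => [Hx|->].
    by apply: fixg; have := Hx g (cycle_id g); rewrite /= apermE.
  move=> h /cycleP[k ->]; rewrite /= apermE.
  elim: k => [|k IH]; first by rewrite expg0 perm1.
  by rewrite expgS permM galpha IH.
have actsT : [acts <[g]>, on [set: T] | 'P].
  by apply/actsP => b _ x; rewrite !inE.
have modT := pgroup_fix_mod pgC actsT.
rewrite FixE cards1 cardsT in modT.
have idx : #|G : H| = #|T|.
  by rewrite -card_orbit (atransP trG alpha (in_setT _)) cardsT.
have p'T : p^'.-nat #|G : H|.
  rewrite idx p'natE //; apply/negP => /dvdnP[m Hm].
  move: modT; rewrite Hm modnMl => /eqP; rewrite eq_sym modn_small ?prime_gt1 //.
have sylH : forall S : {group {perm T}}, p.-Sylow(H) S -> p.-Sylow(G) S.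
  move=> S /and3P[sSH pS p'S]; apply/and3P; split => //.
    exact: subset_trans sHG.
  by rewrite -(Lagrange_index sHG sSH) pnatM p'T.
have key : forall S : {group {perm T}}, p.-Sylow(G) S -> S \subset H ->
    'N_G(S) \subset H.
  move=> S sylS sSH.
  have sylSH : p.-Sylow(H) S := pHall_subl sSH sHG sylS.
  have [h hH sgS] : exists2 h, h \in H & <[g]> \subset S :^ h.
    by apply: Sylow_subJ sylSH _ pgC; rewrite cycle_subG.
  apply/subsetP => n /setIP[nG nN].
  rewrite inE nG /=; apply/astab1P; rewrite /= apermE.
  have Sfix : forall s, s \in S -> s (n alpha) = n alpha.
    move=> s sS.
    have : n * s * n^-1 \in S.
      move/normP: nN => nSn; move: sS; rewrite -{1}nSn.
      by rewrite mem_conjg conjgE invgK mulgA.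
    move/(subsetP sSH); rewrite inE => /andP[_ /astab1P]; rewrite /= apermE.
    by rewrite !permM => e; have := congr1 n e; rewrite permKV.
  have hS : h * g * h^-1 \in S.
    have := subsetP sgS g (cycle_id g).
    by rewrite mem_conjg conjgE invgK mulgA.
  have e := Sfix _ hS; rewrite !permM in e.
  have e2 := congr1 h e; rewrite !permKV in e2.
  have e3 := fixg _ e2.
  have ha : h alpha = alpha.
    by move: hH; rewrite inE => /andP[_ /astab1P]; rewrite /= apermE.
  by apply: (@perm_inj _ h); rewrite e3 ha.
split.
- have [S sylS] := Sylow_exists p H.
  by exists S; split; [apply: sylH | case/andP: sylS].
- move=> S sylS sSH; apply: subset_trans (key S sylS sSH) _.
  by apply/subsetP => x xH; rewrite inE (subsetP sHG) //= (subsetP (normG H)).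
- move=> S sylS sSH _; apply/eqP; rewrite eqEsubset; apply/andP; split.
    by rewrite subsetI key // subsetIr.
  by rewrite setSI.
Qed.
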